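(* Let $B$ be a finite set of Boolean functions. There exists an MSO formula $\theta_{\mathit{extension}}$ over the vocabulary $\tau_{B,\mathit{dl}}$ such that for every $B$-default theory $(W,D)$: $(W,D)$ possesses a stable extension if and only if $\mathcal{A}_{(W,D)}\models\theta_{\mathit{extension}}$.
   Context: $B$-formulae are propositional formulae built from variables using the functions in $B$ (0-ary ones are constants). A $B$-default rule is a triple $\frac{\alpha:\beta}{\gamma}$ of $B$-formulae (prerequisite $\alpha$, justification $\beta$, conclusion $\gamma$); a $B$-default theory $(W,D)$ is a set $W$ of $B$-formulae and a set $D$ of $B$-default rules. For a set $E$ of formulae, $\Gamma(E)$ is the smallest set of formulae with $W\subseteq\Gamma(E)$, $\Gamma(E)$ closed under propositional consequence, and $\gamma\in\Gamma(E)$ whenever $\frac{\alpha:\beta}{\gamma}\in D$, $\alpha\in\Gamma(E)$ and $\neg\beta\notin E$. A stable extension of $(W,D)$ is a set $E$ with $E=\Gamma(E)$. The vocabulary $\tau_{B,\mathit{dl}}$ consists of unary symbols $\mathrm{const}_f$ (for 0-ary $f\in B$), binary symbols $\mathrm{conn}_{f,i}$ ($f\in B$, $1\le i\le\mathrm{arity}(f)$), unary symbols $\mathrm{var},\mathrm{repr},\mathrm{kb},\mathrm{default}$ and binary symbols $\mathrm{prem},\mathrm{just},\mathrm{concl}$. The structure $\mathcal{A}_{(W,D)}$ has as universe the set of subformulae of the formulae in $W\cup\{\alpha,\beta,\gamma,\neg\beta \mid \frac{\alpha:\beta}{\gamma}\in D\}$ together with one new element for each default in $D$; $\mathrm{var}(x)$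 holds iff $x$ is a variable, $\mathrm{repr}(x)$ iff $x$ is one of the formulae of $W$ or one of the $\alpha,\beta,\gamma$ of defaults, $\mathrm{const}_f(x)$ iff $x$ is the constant $f$, $\mathrm{conn}_{f,i}(x,y)$ iff $x$ is the $i$-th argument of the function $f$ at the root of $y$, $\mathrm{kb}(x)$ iff $x\in W$, $\mathrm{default}(x)$ iff $x$ represents a default of $D$, and $\mathrm{prem}(x,y)$ (resp. $\mathrm{just}(x,y)$, $\mathrm{concl}(x,y)$) iff $y$ represents a default $\frac{\alpha:\beta}{\gamma}$ and $x$ is its $\alpha$ (resp. $\beta$, $\gamma$). *)

(* Defs.v *)
From Stdlib Require List.
From mathcomp Require Import all_boot.
Set Implicit Arguments.
Unset Strict Implicit.
Unset Printing Implicit Defensive.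

Definition BoolFun : Type := {n : nat & {ffun n.-tuple bool -> bool}}.

Definition arity (f : BoolFun) : nat := projT1 f.

(* Propositional formulae built from variables (indexed by nat) using
   arbitrary Boolean functions.  0-ary functions are constants. *)
Inductive form : Type :=
| Var of nat
| App of BoolFun & seq form.

Inductive wf : form -> Prop :=
| wf_var n : wf (Var n)
| wf_app f args : size args = arity f ->
    (forall a, List.In a args -> wf a) -> wf (App f args).

Inductive isBform (B : seq BoolFun) : form -> Prop :=
| bf_var n : isBform B (Var n)
| bf_app f args : List.In f B -> size args = arity f ->
    (forall a, List.In a args -> isBform B a) -> isBform B (App f args).

(* Evaluation under an assignment (ill-formed applications evaluate to false). *)
Fixpoint eval (a : nat -> bool) (phi : form) : bool :=
  match phi with
  | Var n => a n
  | App (existT n g) args =>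
      match (insub (map (eval a) args) : option (n.-tuple bool)) with
      | Some t => g t
      | None => false
      end
  end.

Definition negF : BoolFun :=
  existT (fun n => {ffun n.-tuple bool -> bool}) 1
         [ffun t : 1.-tuple bool => ~~ tnth t ord0].

Definition fneg (phi : form) : form := App negF [:: phi].

Definition entails (X : form -> Prop) (phi : form) : Prop :=
  forall a : nat -> bool, (forall psi, X psi -> eval a psi) -> eval a phi.

Record default := Default { dprem : form; djust : form; dconcl : form }.

Definition d0 : default := Default (Var 0) (Var 0) (Var 0).

Definition B_default_theory (B : seq BoolFun) (W : seq form) (D : seq default)
  : Prop :=
  (forall w, List.In w W -> isBform B w) /\
  (forall d, List.In d D ->
     isBform B (dprem d) /\ isBform B (djust d) /\ isBform B (dconcl d)) /\
  List.NoDup D.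

Definition Gamma_closed (W : seq form) (D : seq default) (E X : form -> Prop)
  : Prop :=
  (forall w, List.In w W -> X w) /\
  (forall phi, wf phi -> entails X phi -> X phi) /\
  (forall d, List.In d D -> X (dprem d) -> ~ E (fneg (djust d)) -> X (dconcl d)).

Definition Gamma (W : seq form) (D : seq default) (E : form -> Prop)
  (phi : form) : Prop :=
  forall X, Gamma_closed W D E X -> X phi.

Definition stable_extension (W : seq form) (D : seq default)
  (E : form -> Prop) : Prop :=
  forall phi, E phi <-> Gamma W D E phi.

Definition has_stable_extension (W : seq form) (D : seq default) : Prop :=
  exists E, stable_extension W D E.

Inductive tau_sym : Type :=
| SConst of BoolFun
| SConn of BoolFun & nat
| SVar | SRepr | SKb | SDefault
| SPrem | SJust | SConcl.

Definition sym_arity (R : tau_sym) : nat :=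
  match R with
  | SConst _ | SVar | SRepr | SKb | SDefault => 1
  | SConn _ _ | SPrem | SJust | SConcl => 2
  end.

Definition in_tau (B : seq BoolFun) (R : tau_sym) : Prop :=
  match R with
  | SConst f => List.In f B /\ arity f = 0
  | SConn f i => List.In f B /\ 1 <= i <= arity f
  | _ => True
  end.

Inductive mso : Type :=
| MRel of tau_sym & seq nat
| MEq of nat & nat
| MIn of nat & nat
| MNot of mso
| MAnd of mso & mso
| MEx1 of nat & mso
| MEx2 of nat & mso.

Fixpoint over_tau (B : seq BoolFun) (th : mso) : Prop :=
  match th with
  | MRel R xs => in_tau B R /\ size xs = sym_arity R
  | MEq _ _ | MIn _ _ => True
  | MNot t => over_tau B t
  | MAnd t1 t2 => over_tau B t1 /\ over_tau B t2
  | MEx1 _ t | MEx2 _ t => over_tau B t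
  end.

Fixpoint closed_in (b1 b2 : seq nat) (th : mso) : bool :=
  match th with
  | MRel _ xs => all (fun x => x \in b1) xs
  | MEq x y => (x \in b1) && (y \in b1)
  | MIn x X => (x \in b1) && (X \in b2)
  | MNot t => closed_in b1 b2 t
  | MAnd t1 t2 => closed_in b1 b2 t1 && closed_in b1 b2 t2
  | MEx1 x t => closed_in (x :: b1) b2 t
  | MEx2 X t => closed_in b1 (X :: b2) t
  end.

Definition sentence (th : mso) : Prop := closed_in [::] [::] th.

Unset Implicit Arguments.
Record structure := Structure {
  carrier : Type;
  dom : carrier -> Prop;
  rel : tau_sym -> seq carrier -> Prop }.

Definition upd {T : Type} (v : nat -> T) (x : nat) (u : T) : nat -> T :=
  fun y => if y == x then u else v y.

Fixpoint sat (A : structure) (v1 : nat -> carrier A)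
  (v2 : nat -> carrier A -> Prop) (th : mso) : Prop :=
  match th with
  | MRel R xs => rel A R (map v1 xs)
  | MEq x y => v1 x = v1 y
  | MIn x X => v2 X (v1 x)
  | MNot t => ~ sat A v1 v2 t
  | MAnd t1 t2 => sat A v1 v2 t1 /\ sat A v1 v2 t2
  | MEx1 x t => exists u, dom A u /\ sat A (upd v1 x u) v2 t
  | MEx2 X t => exists P : carrier A -> Prop,
      (forall u, P u -> dom A u) /\ sat A v1 (upd v2 X P) t
  end.

(* A |= th (th is meant to be a sentence, so the assignment is irrelevant). *)
Definition models (A : structure) (th : mso) : Prop :=
  forall v1 v2, sat A v1 v2 th.

(* Elements: formulae (subformulae) and one new element per default
   (the default at position i of D). *)
Inductive elt : Type :=
| EF of form
| ED of nat.

Inductive subform : form -> form -> Prop :=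
| sf_refl phi : subform phi phi
| sf_arg phi f args a : List.In a args -> subform phi a ->
    subform phi (App f args).

Definition roots (W : seq form) (D : seq default) : seq form :=
  W ++ flatten (map (fun d => [:: dprem d; djust d; dconcl d; fneg (djust d)]) D).

Definition dl_dom (W : seq form) (D : seq default) (u : elt) : Prop :=
  match u with
  | EF phi => exists psi, List.In psi (roots W D) /\ subform phi psi
  | ED i => i < size D
  end.

Definition dl_rel (W : seq form) (D : seq default) (R : tau_sym)
  (xs : seq elt) : Prop :=
  match R, xs with
  | SConst f, [:: x] => x = EF (App f [::])
  | SConn f i, [:: x; y] => exists args,
      y = EF (App f args) /\ 1 <= i <= size args /\
      x = EF (nth (Var 0) args i.-1)
  | SVar, [:: x] => exists n, x = EF (Var n)
  | SRepr, [:: x] => exists phi, x = EF phi /\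
      (List.In phi W \/ exists d, List.In d D /\
         (phi = dprem d \/ phi = djust d \/ phi = dconcl d))
  | SKb, [:: x] => exists phi, x = EF phi /\ List.In phi W
  | SDefault, [:: x] => exists i, x = ED i /\ i < size D
  | SPrem, [:: x; y] => exists i, y = ED i /\ i < size D /\
      x = EF (dprem (nth d0 D i))
  | SJust, [:: x; y] => exists i, y = ED i /\ i < size D /\
      x = EF (djust (nth d0 D i))
  | SConcl, [:: x; y] => exists i, y = ED i /\ i < size D /\
      x = EF (dconcl (nth d0 D i))
  | _, _ => False
  end.

Definition A_dl (W : seq form) (D : seq default) : structure :=
  Structure elt (dl_dom W D) (dl_rel W D).

(* Main.v *)
Require Import Defs.
From mathcomp Require Import all_boot.
From Stdlib Require Import Classical ClassicalEpsilon.
From mathcomp Require Import zify.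
Set Implicit Arguments.
Unset Strict Implicit.


Definition ThI (W : seq form) (D : seq default) (Y : nat -> Prop) (psi : form) : Prop :=
  List.In psi W \/ exists i, i < size D /\ Y i /\ psi = dconcl (nth d0 D i).

Definition ClosedI W D (Y G : nat -> Prop) : Prop :=
  forall i, i < size D -> entails (ThI W D Y) (dprem (nth d0 D i)) ->
    ~ entails (ThI W D G) (fneg (djust (nth d0 D i))) -> Y i.

Lemma entails_mono (X X' : form -> Prop) phi :
  (forall psi, X psi -> X' psi) -> entails X phi -> entails X' phi.
Proof. by move=> HX He a Ha; apply: He => psi /HX; apply: Ha. Qed.

Lemma entails_trans (X X' : form -> Prop) phi :
  (forall psi, X' psi -> entails X psi) -> entails X' phi -> entails X phi.
Proof. by move=> HX He a Ha; apply: He => psi /HX; apply. Qed.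

Lemma entails_in (X : form -> Prop) phi : X phi -> entails X phi.
Proof. by move=> H a; apply. Qed.

Lemma bform_wf B phi : isBform B phi -> wf phi.
Proof.
elim=> [n|f args _ Hs _ IH]; first by constructor.
by constructor.
Qed.

Lemma in_nth_D (D : seq default) d : List.In d D -> exists2 i, i < size D & d = nth d0 D i.
Proof.
elim: D => [//|d' D IH] /= [<-|/IH [i Hi ->]]; first by exists 0.
by exists i.+1.
Qed.

Lemma nth_in_D (D : seq default) i : i < size D -> List.In (nth d0 D i) D.
Proof.
elim: D i => [//|d' D IH] [|i] /=; first by left.
by move=> Hi; right; apply: IH.
Qed.

Lemma fneg_wf phi : wf phi -> wf (fneg phi).
Proof. move=> H; constructor => //= a [<-|[]] //. Qed.

Lemma ClosedI_ext W D Y Y' G G' :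
  (forall i, i < size D -> (Y i <-> Y' i)) ->
  (forall i, i < size D -> (G i <-> G' i)) ->
  ClosedI W D Y G -> ClosedI W D Y' G'.
Proof.
move=> HY HG HC i Hi Hp Hj; apply/HY => //; apply: HC => //.
  apply: entails_mono Hp => psi [?|[k [Hk [Hy ->]]]]; [by left|right; exists k].
  by split=> //; split=> //; apply/HY.
move=> Hj'; apply: Hj; apply: entails_mono Hj' => psi [?|[k [Hk [Hy ->]]]]; [by left|right; exists k].
by split=> //; split=> //; apply/HG.
Qed.

Definition EG W D (G : nat -> Prop) phi := wf phi /\ entails (ThI W D G) phi.

Lemma sem_char B W D : B_default_theory B W D ->
  (has_stable_extension W D <->
   exists G : nat -> Prop, ClosedI W D G G /\
     forall Y, ClosedI W D Y G -> forall i, i < size D -> G i -> Y i).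
Proof.
move=> [HW [HD _]].
have wfW psi : List.In psi W -> wf psi by move/HW/bform_wf.
have wfD i : i < size D -> wf (dprem (nth d0 D i)) /\ wf (djust (nth d0 D i)) /\ wf (dconcl (nth d0 D i)).
  by move=> Hi; case: (HD _ (nth_in_D Hi)) => [? [? ?]]; split; [|split]; apply: bform_wf; eauto.
have ThG_wf G psi : ThI W D G psi -> wf psi.
  by case=> [/wfW|[i [Hi [_ ->]]]] //; case: (wfD i Hi) => [_ []].
have EG_closed (E : form -> Prop) G :
  (forall i, i < size D -> EG W D G (dprem (nth d0 D i)) -> ~ E (fneg (djust (nth d0 D i))) -> G i) ->
  Gamma_closed W D E (EG W D G).
  move=> HG; split; [|split].
  - move=> w Hw; split; first exact: wfW.
    by apply: entails_in; left.
  - move=> phi Hwf He; split=> //; apply: entails_trans He => psi [_ H]; exact H.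
  - move=> d /in_nth_D [i Hi ->] Hp HE; split; first by case: (wfD i Hi) => [_ []].
    by apply: entails_in; right; exists i; split=> //; split=> //; apply: HG.
have EG_min (E : form -> Prop) G X :
  (forall Y, (forall i, i < size D -> entails (ThI W D Y) (dprem (nth d0 D i)) ->
     ~ E (fneg (djust (nth d0 D i))) -> Y i) -> forall i, i < size D -> G i -> Y i) ->
  Gamma_closed W D E X -> forall phi, EG W D G phi -> X phi.
  move=> Hmin [XW [Xe Xd]].
  pose Y' i := X (dconcl (nth d0 D i)).
  have HY' : forall i, i < size D -> G i -> Y' i.
    apply: Hmin => i Hi Hp HE; apply: Xd; first exact: nth_in_D.
      apply: Xe; first by case: (wfD i Hi).
      by apply: entails_mono Hp => psi [/XW //|[k [Hk [Hk' ->]]]].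
    exact: HE.
  move=> phi [Hwf He]; apply: Xe => //; apply: entails_mono He.
  by move=> psi [/XW //|[k [Hk [Hk' ->]]]]; apply: HY'.
split.
- move=> [E HE].
  pose CE Y := forall i, i < size D -> entails (ThI W D Y) (dprem (nth d0 D i)) ->
     ~ E (fneg (djust (nth d0 D i))) -> Y i.
  pose G i := i < size D /\ forall Y, CE Y -> Y i.
  have GCE : CE G.
    move=> i Hi Hp HE'; split=> // Y HY; apply: (HY) => //.
    apply: entails_mono Hp => psi [?|[k [Hk [[_ Hk'] ->]]]]; first by left.
    by right; exists k; split=> //; split=> //; exact: Hk' Y HY.
  have GminE : forall Y, CE Y -> forall i, i < size D -> G i -> Y i.
    by move=> Y HY i _ [_ H]; apply: H.
  have EeqG : forall phi, E phi <-> EG W D G phi.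
    move=> phi; split.
      move/HE => HG; apply: HG; apply: EG_closed => i Hi [_ Hp] HE'; exact: GCE.
    move=> Hphi; apply/HE => X HX; exact: (EG_min E G X GminE HX).
  have HEn : forall i, i < size D -> (E (fneg (djust (nth d0 D i))) <-> entails (ThI W D G) (fneg (djust (nth d0 D i)))).
    move=> i Hi; rewrite EeqG; split; first by case.
    by move=> H; split=> //; apply: fneg_wf; case: (wfD i Hi) => [_ []].
  exists G; split.
    move=> i Hi Hp Hj; apply: GCE => //; by rewrite HEn.
  move=> Y HY; apply: GminE => i Hi Hp Hj; apply: HY => //; by rewrite -HEn.
- move=> [G [GC Gmin]].
  exists (EG W D G) => phi; split.
    move=> Hphi X HX; apply: (EG_min (EG W D G) G X) => // Y HY; apply: Gmin.
    move=> i Hi Hp Hj; apply: HY => // [[_ H]]; exact: Hj.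
  move=> HG; apply: HG; apply: EG_closed => i Hi [_ Hp] Hj; apply: GC => // He; apply: Hj.
  by split=> //; apply: fneg_wf; case: (wfD i Hi) => [_ []].
Qed.


Definition mTrue : mso := MNot (MEx1 13 (MNot (MEq 13 13))).
Definition mFalse : mso := MNot mTrue.
Definition MOr a b := MNot (MAnd (MNot a) (MNot b)).
Definition MImp a b := MNot (MAnd a (MNot b)).
Definition MIff a b := MAnd (MImp a b) (MImp b a).
Definition MAll1 x t := MNot (MEx1 x (MNot t)).
Definition MAll2 X t := MNot (MEx2 X (MNot t)).
Definition MBig (ts : seq mso) := foldr MAnd mTrue ts.

Lemma sat_True (A : structure) v1 v2 : sat A v1 v2 mTrue.
Proof. by move=> /= [u [_ H]]; apply: H. Qed.
Lemma sat_False (A : structure) v1 v2 : ~ sat A v1 v2 mFalse.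
Proof. by move=> /=; apply; apply: sat_True. Qed.
Lemma sat_Or (A : structure) v1 v2 a b : sat A v1 v2 (MOr a b) <-> sat A v1 v2 a \/ sat A v1 v2 b.
Proof. by rewrite /=; split; [move=> H; apply: NNPP => H'; apply: H; split=> ?; apply: H'; auto | case=> H [] //]. Qed.
Lemma sat_Imp (A : structure) v1 v2 a b : sat A v1 v2 (MImp a b) <-> (sat A v1 v2 a -> sat A v1 v2 b).
Proof. by rewrite /=; split; [move=> H Ha; apply: NNPP => Hb; apply: H | move=> H [Ha Hb]; apply/Hb/H]. Qed.
Lemma sat_Iff (A : structure) v1 v2 a b : sat A v1 v2 (MIff a b) <-> (sat A v1 v2 a <-> sat A v1 v2 b).
Proof. change (sat A v1 v2 (MImp a b) /\ sat A v1 v2 (MImp b a) <-> (sat A v1 v2 a <-> sat A v1 v2 b)); rewrite !sat_Imp; tauto. Qed.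
Lemma sat_All1 (A : structure) v1 v2 x t : sat A v1 v2 (MAll1 x t) <-> forall u, dom A u -> sat A (upd v1 x u) v2 t.
Proof.
rewrite /=; split; first by move=> H u Hu; apply: NNPP => Ht; apply: H; exists u.
by move=> H [u [Hu Ht]]; apply/Ht/H.
Qed.
Lemma sat_All2 (A : structure) v1 v2 X t : sat A v1 v2 (MAll2 X t) <->
  forall P : carrier A -> Prop, (forall u, P u -> dom A u) -> sat A v1 (upd v2 X P) t.
Proof.
rewrite /=; split; first by move=> H P HP; apply: NNPP => Ht; apply: H; exists P.
by move=> H [P [HP Ht]]; apply/Ht/H.
Qed.
Lemma sat_Big (A : structure) v1 v2 ts : sat A v1 v2 (MBig ts) <-> forall t, List.In t ts -> sat A v1 v2 t.
Proof.
elim: ts => [|t ts IH] /=; first by split=> // _; apply: sat_True.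
rewrite -/(MBig ts) IH; split; first by case=> H1 H2 t' [<-|/H2].
by move=> H; split; [apply: H; left | move=> t' Ht'; apply: H; right].
Qed.

Lemma closed_True b1 b2 : closed_in b1 b2 mTrue.
Proof. by rewrite /= inE eqxx. Qed.
Lemma closed_Big b1 b2 ts : (forall t, List.In t ts -> closed_in b1 b2 t) -> closed_in b1 b2 (MBig ts).
Proof.
elim: ts => [|t ts IH] H /=; first exact: closed_True.
by rewrite H /=; [apply: IH => t' Ht'; apply: H; right | left].
Qed.
Lemma over_Big B ts : (forall t, List.In t ts -> over_tau B t) -> over_tau B (MBig ts).
Proof.
elim: ts => [|t ts IH] H /=; first by [].
by split; [apply: H; left | apply: IH => t' Ht'; apply: H; right].
Qed.
Lemma sat_And (A : structure) v1 v2 a b : sat A v1 v2 (MAnd a b) <-> sat A v1 v2 a /\ sat A v1 v2 b.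
Proof. by []. Qed.
Lemma sat_Ex2 (A : structure) v1 v2 X t : sat A v1 v2 (MEx2 X t) <->
  exists P : carrier A -> Prop, (forall u, P u -> dom A u) /\ sat A v1 (upd v2 X P) t.
Proof. by []. Qed.


Lemma subform_trans a b c : subform a b -> subform b c -> subform a c.
Proof.
move=> Hab Hbc; elim: Hbc Hab => [phi //|phi f args a' Hin _ IH] Hab.
by apply: sf_arg Hin _; apply: IH.
Qed.

Lemma subform_wf a b : subform a b -> wf b -> wf a.
Proof.
elim=> [//|phi f args a' Hin _ IH] H; apply: IH.
by inversion H; subst; auto.
Qed.

Lemma In_cat {T : Type} (x : T) s1 s2 : List.In x (s1 ++ s2) <-> List.In x s1 \/ List.In x s2.
Proof. elim: s1 => [|y s1 IH] /=; first tauto. rewrite IH; tauto. Qed.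

Lemma in_roots_inv W D psi : List.In psi (Defs.roots W D) ->
  List.In psi W \/ exists d, List.In d D /\
   (psi = dprem d \/ psi = djust d \/ psi = dconcl d \/ psi = fneg (djust d)).
Proof.
rewrite /Defs.roots => H0; case/In_cat: H0; first by left.
move=> H; right; elim: D H => [//|d D IH] H.
have H2 : List.In psi ([:: dprem d; djust d; dconcl d; fneg (djust d)] ++
   flatten (map (fun d => [:: dprem d; djust d; dconcl d; fneg (djust d)]) D)) by exact: H.
case/In_cat: H2 => H1.
  exists d; split; first by left.
  case: H1 => [<-|[<-|[<-|[<-|[]]]]]; tauto.
case: (IH H1) => d' [Hd' H']; exists d'; split => //; by right.
Qed.

Lemma in_roots_W W D psi : List.In psi W -> List.In psi (Defs.roots W D).
Proof. by move=> H; apply/In_cat; left. Qed.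

Lemma in_roots_D W D d psi : List.In d D ->
  (psi = dprem d \/ psi = djust d \/ psi = dconcl d) -> List.In psi (Defs.roots W D).
Proof.
move=> Hd Hpsi; apply/In_cat; right.
elim: D Hd => [//|d' D IH] /= [->|/IH H].
  case: Hpsi => [->|[->|->]]; tauto.
by right; right; right; right.
Qed.


Definition hfun (f : BoolFun) : seq bool -> bool :=
  match f with existT n g => fun bs =>
    match (insub bs : option (n.-tuple bool)) with Some t => g t | None => false end end.

Lemma eval_App a f args : eval a (App f args) = hfun f (map (eval a) args).
Proof. by case: f. Qed.

Fixpoint shannon (h : seq bool -> bool) (cs : seq mso) : mso :=
  match cs with
  | [::] => if h [::] then mTrue else mFalse
  | c :: cs' => MOr (MAnd c (shannon (fun bs => h (true :: bs)) cs'))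
                    (MAnd (MNot c) (shannon (fun bs => h (false :: bs)) cs'))
  end.

Lemma sat_shannon (A : structure) v1 v2 h cs bs : size bs = size cs ->
  (forall i, i < size cs -> (sat A v1 v2 (nth mTrue cs i) <-> nth false bs i = true)) ->
  (sat A v1 v2 (shannon h cs) <-> h bs = true).
Proof.
elim: cs h bs => [|c cs IH] h [|b bs] // Hs H.
  rewrite [shannon _ _]/=; case: (h [::]); split=> //; [move=> _; apply: sat_True | move/sat_False=> []].
have Hc := H 0 erefl; rewrite /= in Hc.
have IH' h' : sat A v1 v2 (shannon h' cs) <-> h' bs = true.
  by apply: IH => [|i Hi]; [case: Hs|exact: (H i.+1 Hi)].
change (sat A v1 v2 (MOr (MAnd c (shannon (fun bs => h (true :: bs)) cs))
                    (MAnd (MNot c) (shannon (fun bs => h (false :: bs)) cs))) <-> h (b :: bs) = true).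
rewrite sat_Or /= !IH' Hc.
clear Hs H Hc IH'; by case: b; split; [case=> [[_ ?]|[? _]] | move=> ?; left | case=> [[? _]|[_ ?]] | move=> ?; right].

Qed.

Lemma closed_shannon b1 b2 h cs : (forall c, List.In c cs -> closed_in b1 b2 c) ->
  closed_in b1 b2 (shannon h cs).
Proof.
elim: cs h => [|c cs IH] h H /=; first by case: (h [::]); rewrite /= inE eqxx.
have Hc : closed_in b1 b2 c by apply: H; left.
have Hcs : forall c', List.In c' cs -> closed_in b1 b2 c' by move=> c' Hc'; apply: H; right.
by rewrite Hc !IH.
Qed.

Lemma over_shannon B h cs : (forall c, List.In c cs -> over_tau B c) -> over_tau B (shannon h cs).
Proof.
elim: cs h => [|c cs IH] h H /=; first by case: (h [::]).
have Hc : over_tau B c by apply: H; left.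
have Hcs : forall c', List.In c' cs -> over_tau B c' by move=> c' Hc'; apply: H; right.
by repeat split; auto.
Qed.

Definition cF (f : BoolFun) (i : nat) : mso :=
  MEx1 5 (MAnd (MRel (SConn f i) [:: 5; 0]) (MIn 5 1)).
Definition guard (f : BoolFun) : mso :=
  if arity f == 0 then MRel (SConst f) [:: 0] else MEx1 5 (MRel (SConn f 1) [:: 5; 0]).
Definition gate (f : BoolFun) : mso :=
  MImp (guard f) (MIff (MIn 0 1) (shannon (hfun f) (map (cF f) (iota 1 (arity f))))).
Definition ConsF (B : seq BoolFun) : mso :=
  MAll1 0 (MAnd (MImp (MRel SVar [:: 0]) (MIff (MIn 0 1) (MIn 0 0))) (MBig (map gate B))).
Definition AllTh (Yv : nat) : mso :=
  MAnd (MAll1 6 (MImp (MRel SKb [:: 6]) (MIn 6 1)))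
       (MAll1 7 (MImp (MRel SDefault [:: 7]) (MImp (MIn 7 Yv)
          (MAll1 8 (MImp (MRel SConcl [:: 8; 7]) (MIn 8 1)))))).
Definition Ent B (Yv : nat) : mso :=
  MAll2 0 (MAll2 1 (MImp (ConsF B) (MImp (AllTh Yv) (MIn 10 1)))).
Definition Ent' B : mso :=
  MAll2 0 (MAll2 1 (MImp (ConsF B) (MImp (AllTh 2) (MNot (MIn 11 1))))).
Definition ClosedF B (Yv : nat) : mso :=
  MAll1 9 (MImp (MRel SDefault [:: 9]) (MAll1 10 (MImp (MRel SPrem [:: 10; 9])
    (MImp (Ent B Yv) (MAll1 11 (MImp (MRel SJust [:: 11; 9])
       (MImp (MNot (Ent' B)) (MIn 9 Yv)))))))).
Definition theta B : mso :=
  MEx2 2 (MAnd (ClosedF B 2) (MAll2 3 (MImp (ClosedF B 3)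
    (MAll1 12 (MImp (MRel SDefault [:: 12]) (MImp (MIn 12 2) (MIn 12 3))))))).

Lemma closed_gate b1 b2 f : 0 \in b1 -> 1 \in b2 -> closed_in b1 b2 (gate f).
Proof.
move=> H0 H1; rewrite /gate /guard /=.
have -> : closed_in b1 b2 (if arity f == 0 then MRel (SConst f) [:: 0] else MEx1 5 (MRel (SConn f 1) [:: 5; 0])).
  by case: (arity f == 0) => /=; rewrite ?inE ?eqxx H0 ?orbT.
rewrite H0 H1 /= closed_shannon // => c /List.in_map_iff [i [<- _]].
by rewrite /cF /= inE H0 H1 orbT.
Qed.

Lemma over_gate B f : List.In f B -> over_tau B (gate f).
Proof.
move=> Hf.
have Hs : over_tau B (shannon (hfun f) [seq cF f i | i <- iota 1 (arity f)]).
  apply: over_shannon => c /List.in_map_iff [i [<- /List.in_seq [Hi1 Hi2]]] /=.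
  split=> //; split=> //; split=> //; apply/andP; split; lia.
rewrite /gate /guard /=; split; last by split.
case: eqP => [H0|H0] /=; first by [].
by split=> //; split=> //; lia.
Qed.

Lemma closed_Cons B b1 b2 : 0 \in b2 -> 1 \in b2 -> closed_in b1 b2 (ConsF B).
Proof.
move=> H0 H1 /=; rewrite H0 H1 /=.
apply: closed_Big => t /List.in_map_iff [f [<- _]]; apply: closed_gate => //.
Qed.

Lemma over_Cons B : over_tau B (ConsF B).
Proof.
rewrite /=; split; first by repeat split. apply: over_Big => t /List.in_map_iff [f [<- Hf]].
exact: over_gate.
Qed.

Arguments ConsF : simpl never.

Lemma closed_theta B : sentence (theta B).
Proof.
have HG b1 b2 : 0 \in b1 -> 1 \in b2 -> closed_in b1 b2 (MBig (map gate B)).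
  by move=> H0 H1; apply: closed_Big => t /List.in_map_iff [f [<- _]]; apply: closed_gate.
rewrite /sentence /theta /= !HG //.
Qed.

Lemma over_theta B : over_tau B (theta B).
Proof.
have HC : over_tau B (MBig (map gate B)).
  by apply: over_Big => t /List.in_map_iff [f [<- Hf]]; apply: over_gate.
rewrite /theta /=; repeat split; exact: HC.
Qed.


Lemma eval_fneg a phi : eval a (fneg phi) = ~~ eval a phi.
Proof.
rewrite /fneg eval_App /hfun /negF /=.
case: insubP => [t _ Ht|]; last by []. rewrite ffunE (tnth_nth false) Ht.
by [].
Qed.

Definition pb (P : Prop) : bool := if excluded_middle_informative P then true else false.
Lemma pbP P : pb P = true <-> P.
Proof. by rewrite /pb; case: excluded_middle_informative. Qed.

Lemma In_nth_form (args : seq form) i : i < size args -> List.In (nth (Var 0) args i) args.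
Proof.
elim: args i => [//|a args IH] [|i] /=; first by left.
by move=> Hi; right; apply: IH.
Qed.

Lemma dom_sub W D phi psi : dl_dom W D (EF phi) -> subform psi phi -> dl_dom W D (EF psi).
Proof. move=> [r [Hr Hs]] Hps; exists r; split=> //; exact: subform_trans Hps Hs. Qed.

Lemma dom_arg W D f args a : dl_dom W D (EF (App f args)) -> List.In a args -> dl_dom W D (EF a).
Proof. move=> H Ha; apply: dom_sub H _; apply: sf_arg Ha _; constructor. Qed.

Lemma dom_wf B W D phi : B_default_theory B W D -> dl_dom W D (EF phi) -> wf phi.
Proof.
move=> [HW [HD _]] [r [Hr Hs]]; apply: subform_wf Hs _.
case: (in_roots_inv Hr) => [/HW/bform_wf //|[d [Hd H]]].
case: (HD d Hd) => [H1 [H2 H3]].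
case: H => [->|[->|[->|->]]]; [exact: bform_wf H1|exact: bform_wf H2|exact: bform_wf H3|].
by apply: fneg_wf; exact: bform_wf H2.
Qed.

Lemma dom_W W D psi : List.In psi W -> dl_dom W D (EF psi).
Proof. by move=> H; exists psi; split; [apply: in_roots_W|constructor]. Qed.

Lemma dom_D W D i psi : i < size D ->
  (psi = dprem (nth d0 D i) \/ psi = djust (nth d0 D i) \/ psi = dconcl (nth d0 D i)) ->
  dl_dom W D (EF psi).
Proof.
move=> Hi H; exists psi; split; last constructor.
by apply: in_roots_D H; apply: nth_in_D.
Qed.

Lemma bform_D B W D i : B_default_theory B W D -> i < size D ->
  isBform B (dprem (nth d0 D i)) /\ isBform B (djust (nth d0 D i)) /\ isBform B (dconcl (nth d0 D i)).
Proof. by move=> [_ [HD _]] Hi; apply: HD; apply: nth_in_D. Qed.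

Lemma sat_cF W D v1 v2 f args i : v1 0 = EF (App f args) -> dl_dom W D (EF (App f args)) ->
  i < size args ->
  (sat (A_dl W D) v1 v2 (cF f i.+1) <-> v2 1 (EF (nth (Var 0) args i))).
Proof.
move=> Hv Hd Hi /=; rewrite /upd /= Hv; split.
  move=> [u [Hu [[args' [[<-] [_ ->]]] HT]]] //.
move=> HT; exists (EF (nth (Var 0) args i)); split.
  by apply: dom_arg Hd _; apply: In_nth_form.
split=> //; exists args; split=> //; split=> //; lia.
Qed.

Lemma sat_shannon_gate W D v1 v2 f args bs : v1 0 = EF (App f args) ->
  dl_dom W D (EF (App f args)) -> size args = arity f -> size bs = size args ->
  (forall i, i < size args -> (v2 1 (EF (nth (Var 0) args i)) <-> nth false bs i = true)) ->
  (sat (A_dl W D) v1 v2 (shannon (hfun f) (map (cF f) (iota 1 (arity f)))) <-> hfun f bs = true).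
Proof.
move=> Hv Hd Hs Hb H; apply: sat_shannon; first by rewrite size_map size_iota -Hs.
rewrite size_map size_iota => i Hi.
rewrite (nth_map 0) ?size_iota // nth_iota // add1n -H ?Hs //.
by apply: sat_cF => //; rewrite Hs.
Qed.

Lemma sat_guard W D v1 v2 f : dl_dom W D (v1 0) ->
  sat (A_dl W D) v1 v2 (guard f) -> exists args, v1 0 = EF (App f args).
Proof.
move=> Hd; rewrite /guard; case: (arity f == 0) => /=.
  by move=> ->; exists [::].
by rewrite /upd /= => [[u [_ [args [-> _]]]]]; exists args.
Qed.

Lemma sat_guard_intro W D v1 v2 f args : v1 0 = EF (App f args) -> dl_dom W D (EF (App f args)) ->
  size args = arity f -> sat (A_dl W D) v1 v2 (guard f).
Proof.
move=> Hv Hd Hs; rewrite /guard; case: eqP => H0 /=.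
  by rewrite Hv; move: Hs; rewrite H0; case: args {Hv Hd}.
rewrite /upd /= Hv; exists (EF (nth (Var 0) args 0)); split.
  by apply: dom_arg Hd _; apply: In_nth_form; lia.
by exists args; split=> //; split=> //; lia.
Qed.

Definition aS (S : elt -> Prop) : nat -> bool := fun n => pb (S (EF (Var n))).

Lemma Cons_sound B W D v1 v2 : sat (A_dl W D) v1 v2 (ConsF B) ->
  forall phi, isBform B phi -> dl_dom W D (EF phi) ->
  (v2 1 (EF phi) <-> eval (aS (v2 0)) phi = true).
Proof.
rewrite /ConsF sat_All1 => H phi; elim=> [n|f args Hf Hs Hargs IH] Hd.
  case/sat_And: (H _ Hd) => Hv _; move/sat_Imp: Hv => Hv.
  have Hi : sat (A_dl W D) (upd v1 0 (EF (Var n))) v2 (MIff (MIn 0 1) (MIn 0 0)).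
    by apply: Hv; exists n.
  move/sat_Iff: Hi; rewrite /= /upd /= => ->; by rewrite /aS pbP.
case/sat_And: (H _ Hd) => _ Hg; move/sat_Big: Hg => Hg.
have Hgf := Hg (gate f) (List.in_map _ _ _ Hf).
move/sat_Imp: Hgf => Hgf.
have Hgd : sat (A_dl W D) (upd v1 0 (EF (App f args))) v2 (guard f).
  by apply: sat_guard_intro Hd Hs.
have Hi := Hgf Hgd; move/sat_Iff: Hi => Hi; apply: iff_trans Hi _.
rewrite eval_App; apply: sat_shannon_gate => //; first by rewrite size_map.
move=> i Hi; rewrite (nth_map (Var 0)) //; apply: IH; first exact: In_nth_form.
by apply: dom_arg Hd _; apply: In_nth_form.
Qed.

Definition Sa W D (a : nat -> bool) (u : elt) : Prop :=
  dl_dom W D u /\ exists n, u = EF (Var n) /\ a n.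
Definition Ta W D (a : nat -> bool) (u : elt) : Prop :=
  dl_dom W D u /\ exists phi, u = EF phi /\ eval a phi.

Lemma Ta_EF W D a phi : dl_dom W D (EF phi) -> (Ta W D a (EF phi) <-> eval a phi).
Proof. by move=> Hd; split; [case=> _ [psi [[->] ?]]|move=> H; split=> //; exists phi]. Qed.

Lemma wf_App_size f args : wf (App f args) -> size args = arity f.
Proof. by move=> H; inversion H. Qed.

Lemma Cons_complete B W D a v1 v2 : B_default_theory B W D ->
  v2 0 = Sa W D a -> v2 1 = Ta W D a -> sat (A_dl W D) v1 v2 (ConsF B).
Proof.
move=> HBD H0 H1; rewrite /ConsF; apply/sat_All1 => y Hy; apply/sat_And; split.
  apply/sat_Imp => -[n Hn]; apply/sat_Iff.
  rewrite /= /upd /= in Hn *; subst y; rewrite H0 H1 Ta_EF //.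
  by split; [move=> Ha; split=> //; exists n|case=> _ [m [[->]]]].
apply/sat_Big => t /List.in_map_iff [f [<- Hf]]; apply/sat_Imp => Hg.
have Hy' : dl_dom W D (upd v1 0 y 0) by [].
case: (sat_guard Hy' Hg) => args Hv.
have Hyv : y = EF (App f args) by [].
subst y; have Hs := wf_App_size (dom_wf HBD Hy).
apply/sat_Iff.
change (v2 1 (EF (App f args)) <-> sat (A_dl W D) (upd v1 0 (EF (App f args))) v2
      (shannon (hfun f) [seq cF f i | i <- iota 1 (arity f)])).
rewrite H1 Ta_EF // eval_App; symmetry; apply: sat_shannon_gate => //.
  by rewrite size_map.
move=> i Hi; rewrite H1 (nth_map (Var 0)) // Ta_EF //.
by apply: dom_arg Hy _; apply: In_nth_form.
Qed.

Lemma sat_AllTh W D v1 v2 Yv : sat (A_dl W D) v1 v2 (AllTh Yv) <->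
  (forall psi, List.In psi W -> v2 1 (EF psi)) /\
  (forall i, i < size D -> v2 Yv (ED i) -> v2 1 (EF (dconcl (nth d0 D i)))).
Proof.
rewrite /AllTh sat_And !sat_All1; split.
  case=> H1 H2; split.
    move=> psi Hpsi; have := H1 _ (dom_W D Hpsi); move/sat_Imp; apply.
    by exists psi.
  move=> i Hi HY; have Hd : dl_dom W D (ED i) by [].
  have := H2 _ Hd; move/sat_Imp => H3; have := H3 (ex_intro _ i (conj erefl Hi)).
  move/sat_Imp => H4; have := H4 HY; move/sat_All1 => H5.
  have Hc : dl_dom W D (EF (dconcl (nth d0 D i))) by apply: dom_D Hi _; tauto.
  have := H5 _ Hc; move/sat_Imp; apply; by exists i.
case=> H1 H2; split.
  move=> w Hw; apply/sat_Imp => -[psi [Hw' Hpsi]].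
  by rewrite /= /upd /= in Hw' *; subst w; apply: H1.
move=> e He; apply/sat_Imp => -[i [He' Hi]]; rewrite /= /upd /= in He'; subst e.
apply/sat_Imp => HY; apply/sat_All1 => c Hc; apply/sat_Imp => -[j [Hj [Hj' Hc']]].
rewrite /= /upd /= in Hj Hc' *; case: Hj => ?; subst j c.
exact: H2.
Qed.

Lemma upd_ne {T : Type} (v : nat -> T) x y u : x != y -> upd v y u x = v x.
Proof. by rewrite /upd => /negbTE ->. Qed.

Lemma sat_Ent B W D v1 v2 Yv phi : B_default_theory B W D -> 1 < Yv ->
  v1 10 = EF phi -> isBform B phi -> dl_dom W D (EF phi) ->
  (sat (A_dl W D) v1 v2 (Ent B Yv) <-> entails (ThI W D (fun i => v2 Yv (ED i))) phi).
Proof.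
move=> HBD HYv Hv Hphi Hd.
have Hupd S T : upd (upd v2 0 S) 1 T Yv = v2 Yv.
  by rewrite !upd_ne //; apply/eqP; lia.
rewrite /Ent sat_All2; split.
  move=> H a Ha.
  have := H (Sa W D a) (fun u Hu => proj1 Hu); move/sat_All2 => H'.
  have := H' (Ta W D a) (fun u Hu => proj1 Hu); move/sat_Imp => H2.
  have := H2 (Cons_complete (v1:=v1) HBD erefl erefl); move/sat_Imp => H3.
  have H4 : sat (A_dl W D) v1 (upd (upd v2 0 (Sa W D a)) 1 (Ta W D a)) (AllTh Yv).
    apply/sat_AllTh; split.
      move=> psi Hpsi; rewrite /upd /= Ta_EF; last exact: dom_W.
      by apply: Ha; left.
    move=> i Hi; rewrite Hupd => HY; rewrite /upd /= Ta_EF; last by apply: dom_D Hi _; tauto.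
    by apply: Ha; right; exists i.
  have := H3 H4; rewrite /= Hv; case=> _ [psi [[<-] //]].
move=> He S HS; apply/sat_All2 => T HT; apply/sat_Imp => HC; apply/sat_Imp.
move/sat_AllTh => [HW HD]; rewrite Hupd in HD.
have Hs := Cons_sound HC.
rewrite /= Hv; apply/Hs => //.
apply: He => psi [Hpsi|[i [Hi [HY ->]]]].
  apply/Hs; [by case: HBD => /(_ _ Hpsi)|exact: dom_W|exact: HW].
apply/Hs; [by case: (bform_D HBD Hi) => _ []|by apply: dom_D Hi _; tauto|exact: HD].
Qed.

Lemma sat_Ent' B W D v1 v2 phi : B_default_theory B W D ->
  v1 11 = EF phi -> isBform B phi -> dl_dom W D (EF phi) ->
  (sat (A_dl W D) v1 v2 (Ent' B) <-> entails (ThI W D (fun i => v2 2 (ED i))) (fneg phi)).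
Proof.
move=> HBD Hv Hphi Hd.
have Hupd S T : upd (upd v2 0 S) 1 T 2 = v2 2 by [].
rewrite /Ent' sat_All2; split.
  move=> H a Ha.
  have := H (Sa W D a) (fun u Hu => proj1 Hu); move/sat_All2 => H'.
  have := H' (Ta W D a) (fun u Hu => proj1 Hu); move/sat_Imp => H2.
  have := H2 (Cons_complete (v1:=v1) HBD erefl erefl); move/sat_Imp => H3.
  have H4 : sat (A_dl W D) v1 (upd (upd v2 0 (Sa W D a)) 1 (Ta W D a)) (AllTh 2).
    apply/sat_AllTh; split.
      move=> psi Hpsi; rewrite /upd /= Ta_EF; last exact: dom_W.
      by apply: Ha; left.
    move=> i Hi; rewrite Hupd => HY; rewrite /upd /= Ta_EF; last by apply: dom_D Hi _; tauto.
    by apply: Ha; right; exists i.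
  have := H3 H4; change (~ Ta W D a (v1 11) -> eval a (fneg phi)); rewrite Hv eval_fneg => HT.
  by apply/negP => He; apply: HT; apply/Ta_EF.
move=> He S HS; apply/sat_All2 => T HT; apply/sat_Imp => HC; apply/sat_Imp.
move/sat_AllTh => [HW HD]; rewrite Hupd in HD.
have Hs := Cons_sound HC.
change (~ T (v1 11)); rewrite Hv => HE.
have Hev : eval (aS S) phi = true by apply/(Hs _ Hphi Hd).
suff Hth : forall psi, ThI W D (fun i => v2 2 (ED i)) psi -> eval (aS S) psi.
  by move: (He _ Hth); rewrite eval_fneg Hev.
move=> psi [Hpsi|[i [Hi [HY ->]]]].
  apply/Hs; [by case: HBD => /(_ _ Hpsi)|exact: dom_W|exact: HW].
apply/Hs; [by case: (bform_D HBD Hi) => _ []|by apply: dom_D Hi _; tauto|exact: HD].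
Qed.

Lemma sat_Closed B W D v1 v2 Yv : B_default_theory B W D -> 1 < Yv ->
  (sat (A_dl W D) v1 v2 (ClosedF B Yv) <->
   ClosedI W D (fun i => v2 Yv (ED i)) (fun i => v2 2 (ED i))).
Proof.
move=> HBD HYv; rewrite /ClosedF sat_All1; split.
  move=> H i Hi Hp Hj.
  have Hdi : dl_dom W D (ED i) by [].
  have [Ha [Hb Hc]] := bform_D HBD Hi.
  have := H _ Hdi; move/sat_Imp => /(_ (ex_intro _ i (conj erefl Hi))).
  move/sat_All1 => /(_ (EF (dprem (nth d0 D i))) (dom_D W Hi (or_introl erefl))).
  move/sat_Imp => /(_ (ex_intro _ i (conj erefl (conj Hi erefl)))).
  move/sat_Imp => /(_ (proj2 (@sat_Ent B W D (upd (upd v1 9 (ED i)) 10 (EF (dprem (nth d0 D i)))) v2 Yv _ HBD HYv erefl Ha (dom_D W Hi (or_introl erefl))) Hp)).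
  have Hdj : dl_dom W D (EF (djust (nth d0 D i))) by apply: dom_D Hi _; tauto.
  move/sat_All1 => /(_ _ Hdj).
  move/sat_Imp => /(_ (ex_intro _ i (conj erefl (conj Hi erefl)))).
  move/sat_Imp; apply => /(@sat_Ent' B W D (upd (upd (upd v1 9 (ED i)) 10 (EF (dprem (nth d0 D i)))) 11 (EF (djust (nth d0 D i)))) v2 _ HBD erefl Hb Hdj); exact: Hj.
move=> H d Hd; apply/sat_Imp => -[i [Hdi Hi]]; rewrite /upd /= in Hdi; subst d.
have [Ha [Hb Hc]] := bform_D HBD Hi.
apply/sat_All1 => p Hp; apply/sat_Imp => -[i' [Hi' [_ Hp']]]; rewrite /upd /= in Hi' Hp'.
case: Hi' => ?; subst i' p.
apply/sat_Imp => /(@sat_Ent B W D (upd (upd v1 9 (ED i)) 10 (EF (dprem (nth d0 D i)))) v2 Yv _ HBD HYv erefl Ha Hp) HE.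
apply/sat_All1 => j Hj; apply/sat_Imp => -[i' [Hi' [_ Hj']]]; rewrite /upd /= in Hi' Hj'.
case: Hi' => ?; subst i' j.
apply/sat_Imp => HnE; apply: H => // HE'; apply: HnE.
by apply/(@sat_Ent' B W D (upd (upd (upd v1 9 (ED i)) 10 (EF (dprem (nth d0 D i)))) 11 (EF (djust (nth d0 D i)))) v2 _ HBD erefl Hb Hj).
Qed.

Lemma sat_theta B W D v1 v2 : B_default_theory B W D ->
  (sat (A_dl W D) v1 v2 (theta B) <->
   exists G : nat -> Prop, ClosedI W D G G /\
     forall Y, ClosedI W D Y G -> forall i, i < size D -> G i -> Y i).
Proof.
move=> HBD; rewrite /theta sat_Ex2; split.
  case=> Gs [HGs /sat_And [HC Hmin]].
  have HC' := proj1 (sat_Closed v1 (upd v2 2 Gs) HBD (erefl : 1 < 2)) HC.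
  exists (fun i => Gs (ED i)); split; first exact: HC'.
  move=> Y HY i Hi HGi.
  pose Ys u := dl_dom W D u /\ exists j, u = ED j /\ Y j.
  move/sat_All2: Hmin => /(_ Ys (fun u Hu => proj1 Hu)).
  move/sat_Imp => H.
  have HCY : sat (A_dl W D) v1 (upd (upd v2 2 Gs) 3 Ys) (ClosedF B 3).
    apply/(sat_Closed _ _ HBD (erefl : 1 < 3)).
    apply: ClosedI_ext HY => j Hj //=; rewrite /upd /=.
    by split; [move=> HYj; split=> //; exists j|case=> _ [k [[->]]]].
  move/sat_All1: (H HCY) => /(_ (ED i) Hi) /sat_Imp /(_ (ex_intro _ i (conj erefl Hi))).
  move/sat_Imp => /(_ HGi) /=; rewrite /upd /=.
  by case=> _ [k [[->]]].
case=> G [HG Hmin].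
pose Gs u := dl_dom W D u /\ exists j, u = ED j /\ G j.
have HGs j : j < size D -> (G j <-> Gs (ED j)).
  by move=> Hj; split; [move=> HGj; split=> //; exists j|case=> _ [k [[->]]]].
exists Gs; split; first by move=> u [].
split.
  apply/(sat_Closed _ _ HBD (erefl : 1 < 2)); rewrite /upd /=.
  exact (ClosedI_ext HGs HGs HG).
apply/sat_All2 => Ys HYs; apply/sat_Imp => /(sat_Closed _ _ HBD (erefl : 1 < 3)).
move=> HC; rewrite /upd /= in HC.
have HC' : ClosedI W D (fun i => Ys (ED i)) G.
  apply: ClosedI_ext HC => // j Hj; by rewrite HGs.
apply/sat_All1 => dd Hdd; apply/sat_Imp => -[i [Hi' Hi]]; rewrite /upd /= in Hi'; subst dd.
apply/sat_Imp; rewrite /= /upd /= => -[_ [k [[<-] HGi]]].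
exact: Hmin HC' i Hi HGi.
Qed.

Theorem lemma3 (B : seq BoolFun) :
  exists theta_extension : mso,
    sentence theta_extension /\ over_tau B theta_extension /\
    forall (W : seq form) (D : seq default),
      B_default_theory B W D ->
      (has_stable_extension W D <-> models (A_dl W D) theta_extension).
Proof.
exists (theta B); split; first exact: closed_theta.
split; first exact: over_theta.
move=> W D HBD; rewrite (sem_char HBD); split.
  by move=> H v1 v2; apply/(sat_theta v1 v2 HBD).
move=> H; apply/(sat_theta (fun _ => EF (Var 0)) (fun _ _ => False) HBD); exact: H.
Qed.
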